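(* There exists a set $T$ of five terminals in the plane, no two on a common horizontal or vertical line, for which $N_{\varnothing}(T)$ is a bidirected Manhattan network on $T$ but is not of minimum length: its length is $34$, while a bidirected Manhattan network on $T$ of length $32$ exists.
   Context: For points $p,q$, $R(p,q)$ is the smallest closed axis-parallel rectangle containing $p$ and $q$; for terminals ${\bf t}_i,{\bf t}_j\in T$, $R_{i,j}=R({\bf t}_i,{\bf t}_j)$, which is empty if $R_{i,j}\cap T=\{{\bf t}_i,{\bf t}_j\}$. $\Gamma(T)$ is the grid formed by the horizontal and vertical lines through the terminals, restricted to the bounding box of $T$. An oriented subnetwork of $\Gamma(T)$ is a set of edges of $\Gamma(T)$ each directed in exactly one sense; its length is the total length of its edges. A bidirected Manhattan network on $T$ is an oriented subnetwork of $\Gamma(T)$ containing, for every ordered pair of distinct terminals $(t,t')$, a directed path from $t$ to $t'$ of length $|t^x-t'^x|+|t^y-t'^y|$. $N_{\varnothing}(T)$ is the oriented subnetwork consisting of the boundary edges of all empty rectangles $R_{i,j}$, where the boundary of $R_{i,j}$ is oriented clockwise if the segment ${\bf t}_i{\bf t}_j$ has positive slope and counterclockwise if it has negative slope. *)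

(* Defs.v *)
From Stdlib Require Import Reals List.
Import ListNotations.
Open Scope R_scope.

Definition point : Type := (R * R)%type.
Definition px (p : point) : R := fst p.
Definition py (p : point) : R := snd p.

Definition dedge : Type := (point * point)%type.

Definition l1 (p q : point) : R := Rabs (px p - px q) + Rabs (py p - py q).

(* Edges of the grid Gamma(T): segments between consecutive grid vertices
   on a horizontal (resp. vertical) line through a terminal.  Since all grid
   lines pass through terminals, this is automatically restricted to the
   bounding box of T. *)
Definition grid_edge (T : list point) (p q : point) : Prop :=
  let Xs := map px T in
  let Ys := map py T in
  (In (py p) Ys /\ py p = py q /\ In (px p) Xs /\ In (px q) Xs /\ px p <> px q /\
   forall x, In x Xs -> ~ (Rmin (px p) (px q) < x < Rmax (px p) (px q)))
  \/
  (In (px p) Xs /\ px p = px q /\ In (py p) Ys /\ In (py q) Ys /\ py p <> py q /\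
   forall y, In y Ys -> ~ (Rmin (py p) (py q) < y < Rmax (py p) (py q))).

Definition oriented_subnetwork (T : list point) (N : list dedge) : Prop :=
  NoDup N /\
  (forall p q, In (p, q) N -> grid_edge T p q) /\
  (forall p q, In (p, q) N -> ~ In (q, p) N).

Definition edge_len (e : dedge) : R := l1 (fst e) (snd e).

Definition net_length (N : list dedge) : R :=
  fold_right (fun e acc => edge_len e + acc) 0 N.

(* [dpath N s vs t]: s -> v1 -> ... -> vk = t is a directed path in N,
   where vs = [v1; ...; vk]. *)
Fixpoint dpath (N : list dedge) (s : point) (vs : list point) (t : point) : Prop :=
  match vs with
  | [] => s = t
  | v :: vs' => In (s, v) N /\ dpath N v vs' t
  end.

Fixpoint path_len (s : point) (vs : list point) : R :=
  match vs with
  | [] => 0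
  | v :: vs' => l1 s v + path_len v vs'
  end.

Definition bidirected_MN (T : list point) (N : list dedge) : Prop :=
  oriented_subnetwork T N /\
  forall t t', In t T -> In t' T -> t <> t' ->
    exists vs, dpath N t vs t' /\ path_len t vs = l1 t t'.

Definition in_rect (a b p : point) : Prop :=
  Rmin (px a) (px b) <= px p <= Rmax (px a) (px b) /\
  Rmin (py a) (py b) <= py p <= Rmax (py a) (py b).

Definition empty_rect (T : list point) (a b : point) : Prop :=
  forall t, In t T -> in_rect a b t -> t = a \/ t = b.

(* The directed segment p -> q lies on the boundary of R(a,b) and is
   oriented clockwise (y axis pointing up): top side left-to-right,
   right side top-to-bottom, bottom side right-to-left, left side
   bottom-to-top. *)
Definition cw_boundary (a b p q : point) : Prop :=
  let x1 := Rmin (px a) (px b) in let x2 := Rmax (px a) (px b) in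
  let y1 := Rmin (py a) (py b) in let y2 := Rmax (py a) (py b) in
  (py p = y2 /\ py q = y2 /\ x1 <= px p /\ px p < px q /\ px q <= x2) \/
  (px p = x2 /\ px q = x2 /\ y1 <= py q /\ py q < py p /\ py p <= y2) \/
  (py p = y1 /\ py q = y1 /\ x1 <= px q /\ px q < px p /\ px p <= x2) \/
  (px p = x1 /\ px q = x1 /\ y1 <= py p /\ py p < py q /\ py q <= y2).

Definition ccw_boundary (a b p q : point) : Prop := cw_boundary a b q p.

Definition pos_slope (a b : point) : Prop :=
  0 < (px b - px a) * (py b - py a).

Definition in_N_empty (T : list point) (p q : point) : Prop :=
  grid_edge T p q /\
  exists a b, In a T /\ In b T /\ a <> b /\ empty_rect T a b /\
    ((pos_slope a b /\ cw_boundary a b p q) \/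
     (~ pos_slope a b /\ ccw_boundary a b p q)).

(* Main.v *)
Require Import Defs.
From Stdlib Require Import Reals List.
From Stdlib Require Import Lia Lra ZArith Bool FinFun.
Import ListNotations.
Open Scope R_scope.

Definition zpt := (Z*Z)%type.
Definition toR (u:zpt) : point := (IZR (fst u), IZR (snd u)).
Definition toR2 (e: zpt*zpt) : dedge := (toR (fst e), toR (snd e)).

Lemma RZeq (x y : Z) : IZR x = IZR y <-> x = y.
Proof. split; [apply eq_IZR | intros ->; reflexivity]. Qed.
Lemma RZle (x y : Z) : IZR x <= IZR y <-> (x <= y)%Z.
Proof. split; [apply le_IZR | apply IZR_le]. Qed.
Lemma RZlt (x y : Z) : IZR x < IZR y <-> (x < y)%Z.
Proof. split; [apply lt_IZR | apply IZR_lt]. Qed.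
Lemma RZneq (x y : Z) : IZR x <> IZR y <-> x <> y.
Proof. rewrite RZeq. tauto. Qed.

Lemma Rmin_IZR a b : Rmin (IZR a) (IZR b) = IZR (Z.min a b).
Proof. unfold Rmin; destruct (Rle_dec (IZR a) (IZR b)) as [h|h].
 - apply le_IZR in h; f_equal; lia.
 - apply Rnot_le_lt in h; apply lt_IZR in h; f_equal; lia. Qed.
Lemma Rmax_IZR a b : Rmax (IZR a) (IZR b) = IZR (Z.max a b).
Proof. unfold Rmax; destruct (Rle_dec (IZR a) (IZR b)) as [h|h].
 - apply le_IZR in h; f_equal; lia.
 - apply Rnot_le_lt in h; apply lt_IZR in h; f_equal; lia. Qed.

Lemma toR_inj u v : toR u = toR v <-> u = v.
Proof. destruct u as [a b], v as [c d]; unfold toR; simpl; split.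
 - intro H; inversion H as [[H1 H2]]; apply eq_IZR in H1; apply eq_IZR in H2; subst; reflexivity.
 - intro H; inversion H; reflexivity. Qed.

Lemma In_IZR z l : In (IZR z) (map IZR l) <-> In z l.
Proof. rewrite in_map_iff; split.
 - intros [x [Hx Hi]]; apply eq_IZR in Hx; subst; auto.
 - intros H; exists z; auto. Qed.

Lemma In_IZR_ex x l : In x (map IZR l) -> exists z, x = IZR z /\ In z l.
Proof. rewrite in_map_iff; intros [z [H1 H2]]; eauto. Qed.

Lemma forall_IZR (P : R -> Prop) l :
  (forall x, In x (map IZR l) -> P x) <-> (forall z, In z l -> P (IZR z)).
Proof. split; intros H.
 - intros z Hz; apply H, in_map; auto.
 - intros x Hx; apply in_map_iff in Hx; destruct Hx as [z [<- Hz]]; auto. Qed.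

Lemma forall_toR (P : point -> Prop) l :
  (forall x, In x (map toR l) -> P x) <-> (forall z, In z l -> P (toR z)).
Proof. split; intros H.
 - intros z Hz; apply H, in_map; auto.
 - intros x Hx; apply in_map_iff in Hx; destruct Hx as [z [<- Hz]]; auto. Qed.

Lemma ex_toR (P : point -> Prop) l :
  (exists x, In x (map toR l) /\ P x) <-> (exists z, In z l /\ P (toR z)).
Proof. split.
 - intros [x [Hx HP]]; apply in_map_iff in Hx; destruct Hx as [z [<- Hz]]; eauto.
 - intros [z [Hz HP]]; exists (toR z); split; auto; apply in_map; auto. Qed.

Lemma forallb_iff {A} (f : A -> bool) l : forallb f l = true <-> (forall x, In x l -> f x = true).
Proof. apply forallb_forall. Qed.
Lemma existsb_iff {A} (f : A -> bool) l : existsb f l = true <-> (exists x, In x l /\ f x = true).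
Proof. apply existsb_exists. Qed.

Definition inZ (z:Z) l := existsb (Z.eqb z) l.
Lemma inZ_iff z l : inZ z l = true <-> In z l.
Proof. unfold inZ; rewrite existsb_iff; split.
 - intros [x [Hx He]]; apply Z.eqb_eq in He; subst; auto.
 - intros H; exists z; split; auto; apply Z.eqb_refl. Qed.

Definition zeqp (u v : zpt) := Z.eqb (fst u) (fst v) && Z.eqb (snd u) (snd v).
Lemma zeqp_iff u v : zeqp u v = true <-> u = v.
Proof. destruct u, v; unfold zeqp; simpl; rewrite andb_true_iff, !Z.eqb_eq; split.
 - intros [-> ->]; auto.
 - intro H; inversion H; auto. Qed.

Definition zeqe (e f : zpt*zpt) := zeqp (fst e) (fst f) && zeqp (snd e) (snd f).
Lemma zeqe_iff e f : zeqe e f = true <-> e = f.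
Proof. destruct e, f; unfold zeqe; simpl; rewrite andb_true_iff, !zeqp_iff; split.
 - intros [-> ->]; auto.
 - intro H; inversion H; auto. Qed.
Definition inE e l := existsb (zeqe e) l.
Lemma inE_iff e l : inE e l = true <-> In e l.
Proof. unfold inE; rewrite existsb_iff; split.
 - intros [x [Hx He]]; apply zeqe_iff in He; subst; auto.
 - intros H; exists e; split; auto; apply zeqe_iff; auto. Qed.

Lemma map_px Tz : map px (map toR Tz) = map IZR (map fst Tz).
Proof. rewrite !map_map; reflexivity. Qed.
Lemma map_py Tz : map py (map toR Tz) = map IZR (map snd Tz).
Proof. rewrite !map_map; reflexivity. Qed.

Definition between (a b x : Z) := negb (Z.ltb (Z.min a b) x && Z.ltb x (Z.max a b)).

Definition zgrid (Tz : list zpt) (u v : zpt) : bool :=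
  let Xs := map fst Tz in let Ys := map snd Tz in
  (inZ (snd u) Ys && Z.eqb (snd u) (snd v) && inZ (fst u) Xs && inZ (fst v) Xs &&
   negb (Z.eqb (fst u) (fst v)) && forallb (between (fst u) (fst v)) Xs)
  || (inZ (fst u) Xs && Z.eqb (fst u) (fst v) && inZ (snd u) Ys && inZ (snd v) Ys &&
   negb (Z.eqb (snd u) (snd v)) && forallb (between (snd u) (snd v)) Ys).

Lemma between_iff a b l :
  (forall x, In x (map IZR l) -> ~ (Rmin (IZR a) (IZR b) < x < Rmax (IZR a) (IZR b)))
  <-> forallb (between a b) l = true.
Proof. rewrite forall_IZR, forallb_iff, Rmin_IZR, Rmax_IZR; unfold between.
 split; intros H z Hz; specialize (H z Hz).
 - rewrite !RZlt in H. apply negb_true_iff. apply not_true_iff_false.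
   rewrite andb_true_iff, !Z.ltb_lt; auto.
 - rewrite !RZlt. apply negb_true_iff in H. apply not_true_iff_false in H.
   rewrite andb_true_iff, !Z.ltb_lt in H; auto. Qed.

Lemma grid_iff Tz u v : grid_edge (map toR Tz) (toR u) (toR v) <-> zgrid Tz u v = true.
Proof.
  unfold grid_edge, zgrid. rewrite map_px, map_py.
  destruct u as [a b], v as [c d]; unfold toR, px, py; simpl.
  rewrite !between_iff, orb_true_iff, !andb_true_iff, !In_IZR, !RZneq, !RZeq,
    !inZ_iff, !negb_true_iff, !Z.eqb_eq, !Z.eqb_neq.
  tauto.
Qed.

Definition zcw (a b p q : zpt) : bool :=
  let x1 := Z.min (fst a) (fst b) in let x2 := Z.max (fst a) (fst b) in
  let y1 := Z.min (snd a) (snd b) in let y2 := Z.max (snd a) (snd b) in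
  (Z.eqb (snd p) y2 && Z.eqb (snd q) y2 && Z.leb x1 (fst p) && Z.ltb (fst p) (fst q) && Z.leb (fst q) x2) ||
  (Z.eqb (fst p) x2 && Z.eqb (fst q) x2 && Z.leb y1 (snd q) && Z.ltb (snd q) (snd p) && Z.leb (snd p) y2) ||
  (Z.eqb (snd p) y1 && Z.eqb (snd q) y1 && Z.leb x1 (fst q) && Z.ltb (fst q) (fst p) && Z.leb (fst p) x2) ||
  (Z.eqb (fst p) x1 && Z.eqb (fst q) x1 && Z.leb y1 (snd p) && Z.ltb (snd p) (snd q) && Z.leb (snd q) y2).

Lemma cw_iff a b p q : cw_boundary (toR a) (toR b) (toR p) (toR q) <-> zcw a b p q = true.
Proof.
  unfold cw_boundary, zcw; unfold toR, px, py; simpl.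
  rewrite !Rmin_IZR, !Rmax_IZR, !orb_true_iff, !andb_true_iff, !RZeq, !RZle, !RZlt,
    !Z.eqb_eq, !Z.leb_le, !Z.ltb_lt.
  tauto.
Qed.

Definition zpos (a b : zpt) : bool := Z.ltb 0 ((fst b - fst a) * (snd b - snd a)).
Lemma pos_iff a b : pos_slope (toR a) (toR b) <-> zpos a b = true.
Proof. unfold pos_slope, zpos, toR, px, py; simpl.
  rewrite <- !minus_IZR, <- mult_IZR, RZlt, Z.ltb_lt; tauto. Qed.

Definition zin_rect (a b p : zpt) : bool :=
  Z.leb (Z.min (fst a) (fst b)) (fst p) && Z.leb (fst p) (Z.max (fst a) (fst b)) &&
  Z.leb (Z.min (snd a) (snd b)) (snd p) && Z.leb (snd p) (Z.max (snd a) (snd b)).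
Lemma in_rect_iff a b p : in_rect (toR a) (toR b) (toR p) <-> zin_rect a b p = true.
Proof. unfold in_rect, zin_rect, toR, px, py; simpl.
  rewrite !Rmin_IZR, !Rmax_IZR, !andb_true_iff, !RZle, !Z.leb_le; tauto. Qed.

Definition zempty Tz a b : bool :=
  forallb (fun t => negb (zin_rect a b t) || zeqp t a || zeqp t b) Tz.
Lemma empty_iff Tz a b : empty_rect (map toR Tz) (toR a) (toR b) <-> zempty Tz a b = true.
Proof. unfold empty_rect, zempty. rewrite (forall_toR (fun t => in_rect (toR a) (toR b) t -> t = toR a \/ t = toR b)).
  rewrite forallb_iff. split; intros H z Hz; specialize (H z Hz).
  - rewrite in_rect_iff, !toR_inj in H.
    destruct (zin_rect a b z); simpl.
    + destruct (H eq_refl) as [->| ->]; rewrite ?(proj2 (zeqp_iff _ _) eq_refl); auto with bool.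
    + reflexivity.
  - rewrite in_rect_iff, !toR_inj. intro Hr. rewrite Hr in H. simpl in H.
    apply orb_true_iff in H; destruct H as [H|H]; apply zeqp_iff in H; auto. Qed.

Definition zNE Tz u v : bool :=
  zgrid Tz u v && existsb (fun a => existsb (fun b =>
     negb (zeqp a b) && zempty Tz a b &&
     ((zpos a b && zcw a b u v) || (negb (zpos a b) && zcw a b v u))) Tz) Tz.

Lemma NE_iff Tz u v : in_N_empty (map toR Tz) (toR u) (toR v) <-> zNE Tz u v = true.
Proof.
  unfold in_N_empty, zNE. rewrite andb_true_iff, grid_iff, existsb_iff.
  apply and_iff_compat_l. split.
  - intros [a [b [Ha [Hb [Hab [He Hs]]]]]].
    apply in_map_iff in Ha; destruct Ha as [a' [<- Ha]].
    apply in_map_iff in Hb; destruct Hb as [b' [<- Hb]].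
    exists a'; split; auto. apply existsb_iff; exists b'; split; auto.
    unfold ccw_boundary in Hs.
    rewrite toR_inj in Hab. rewrite empty_iff in He. rewrite pos_iff, !cw_iff in Hs.
    rewrite not_true_iff_false in Hs.
    rewrite !andb_true_iff, orb_true_iff, !andb_true_iff, !negb_true_iff.
    destruct (zeqp a' b') eqn:E; [apply zeqp_iff in E; tauto|]. tauto.
  - intros [a [Ha H]]. apply existsb_iff in H. destruct H as [b [Hb H]].
    exists (toR a), (toR b). split; [apply in_map; auto|]. split; [apply in_map; auto|].
    unfold ccw_boundary.
    rewrite toR_inj, empty_iff, pos_iff, !cw_iff.
    rewrite !andb_true_iff, orb_true_iff, !andb_true_iff, !negb_true_iff in H.
    rewrite not_true_iff_false.
    destruct H as [[H1 H2] H3]. split; [intro E; subst; rewrite (proj2 (zeqp_iff b b) eq_refl) in H1; discriminate|].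
    tauto.
Qed.

Definition zl1 (u v : zpt) : Z := (Z.abs (fst u - fst v) + Z.abs (snd u - snd v))%Z.
Lemma l1_IZR u v : l1 (toR u) (toR v) = IZR (zl1 u v).
Proof. unfold l1, zl1, toR, px, py; simpl.
  rewrite plus_IZR, !abs_IZR, !minus_IZR; reflexivity. Qed.

Fixpoint zdpath (Nz : list (zpt*zpt)) (s : zpt) (vs : list zpt) (t : zpt) : bool :=
  match vs with
  | [] => zeqp s t
  | v :: vs' => inE (s, v) Nz && zdpath Nz v vs' t
  end.
Fixpoint zplen (s : zpt) (vs : list zpt) : Z :=
  match vs with
  | [] => 0%Z
  | v :: vs' => (zl1 s v + zplen v vs')%Z
  end.

Lemma zdpath_ok Nz s vs t : zdpath Nz s vs t = true -> dpath (map toR2 Nz) (toR s) (map toR vs) (toR t).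
Proof. revert s; induction vs as [|v vs IH]; intros s H; simpl in *.
  - apply zeqp_iff in H; subst; auto.
  - apply andb_true_iff in H; destruct H as [H1 H2]; split; auto.
    apply inE_iff in H1. change (toR s, toR v) with (toR2 (s, v)). apply in_map; auto. Qed.

Lemma zplen_ok s vs : path_len (toR s) (map toR vs) = IZR (zplen s vs).
Proof. revert s; induction vs as [|v vs IH]; intros s; simpl; auto.
  rewrite IH, l1_IZR, plus_IZR; reflexivity. Qed.

Fixpoint nodupb (l : list (zpt*zpt)) : bool :=
  match l with [] => true | x :: r => negb (inE x r) && nodupb r end.
Lemma nodupb_ok l : nodupb l = true -> NoDup l.
Proof. induction l as [|x r IH]; simpl; intros H; constructor.
  - apply andb_true_iff in H; destruct H as [H _]. rewrite negb_true_iff in H.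
    intro Hi; apply inE_iff in Hi; congruence.
  - apply andb_true_iff in H; tauto. Qed.

Definition check_net (Tz : list zpt) (Nz : list (zpt*zpt)) (table : list (zpt*zpt*list zpt)) : bool :=
  nodupb Nz &&
  forallb (fun e => zgrid Tz (fst e) (snd e) && negb (inE (snd e, fst e) Nz)) Nz &&
  forallb (fun s => forallb (fun t => zeqp s t || existsb (fun x =>
     match x with (a, b, vs) => zeqp a s && zeqp b t && zdpath Nz s vs t && Z.eqb (zplen s vs) (zl1 s t) end) table) Tz) Tz.

Lemma toR2_inj : Injective toR2.
Proof. intros [a b] [c d]; unfold toR2; simpl; intro H.
  assert (H1 : toR a = toR c) by congruence. assert (H2 : toR b = toR d) by congruence.
  apply toR_inj in H1; apply toR_inj in H2; subst; auto. Qed.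

Lemma check_net_ok Tz Nz table : check_net Tz Nz table = true ->
  bidirected_MN (map toR Tz) (map toR2 Nz).
Proof.
  unfold check_net; rewrite !andb_true_iff; intros [[H1 H2] H3].
  pose proof (proj1 (forallb_forall _ _) H2) as H2'; pose proof (proj1 (forallb_forall _ _) H3) as H3'; clear H2 H3; rename H2' into H2, H3' into H3. split; [split; [|split]|].
  - apply Injective_map_NoDup; [apply toR2_inj | apply nodupb_ok; auto].
  - intros p q Hpq. apply in_map_iff in Hpq; destruct Hpq as [[u v] [He Hi]].
    unfold toR2 in He; simpl in He; inversion He; subst.
    apply grid_iff. specialize (H2 _ Hi); simpl in H2; apply andb_true_iff in H2; tauto.
  - intros p q Hpq Hqp. apply in_map_iff in Hpq; destruct Hpq as [[u v] [He Hi]].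
    unfold toR2 in He; simpl in He; inversion He; subst.
    apply in_map_iff in Hqp; destruct Hqp as [[u' v'] [He' Hi']].
    unfold toR2 in He'; simpl in He'.
    assert (E1 : toR u' = toR v) by congruence. assert (E2 : toR v' = toR u) by congruence.
    apply toR_inj in E1; apply toR_inj in E2; subst.
    specialize (H2 _ Hi); simpl in H2; apply andb_true_iff in H2; destruct H2 as [_ H2].
    rewrite negb_true_iff in H2. apply inE_iff in Hi'. rewrite <- not_true_iff_false in H2.
    exact (H2 Hi').
  - intros t t' Ht Ht' Hne.
    apply in_map_iff in Ht; destruct Ht as [s [<- Hs]].
    apply in_map_iff in Ht'; destruct Ht' as [s' [<- Hs']].
    specialize (H3 _ Hs). rewrite forallb_iff in H3. specialize (H3 _ Hs').
    apply orb_true_iff in H3; destruct H3 as [H3|H3].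
    { apply zeqp_iff in H3; subst; tauto. }
    apply existsb_iff in H3; destruct H3 as [[[a b] vs] [_ H3]].
    rewrite !andb_true_iff in H3; destruct H3 as [[[_ _] Hp] Hl].
    exists (map toR vs); split; [apply zdpath_ok; auto|].
    rewrite zplen_ok, l1_IZR. apply Z.eqb_eq in Hl; rewrite Hl; reflexivity.
Qed.

Definition zlen (l : list (zpt*zpt)) : Z := fold_right (fun e acc => (zl1 (fst e) (snd e) + acc)%Z) 0%Z l.
Lemma len_ok l : net_length (map toR2 l) = IZR (zlen l).
Proof. induction l as [|e l IH]; simpl; auto.
  rewrite IH, plus_IZR; unfold edge_len, toR2; simpl; rewrite l1_IZR; reflexivity. Qed.

Open Scope Z_scope.
Definition Tz : list zpt := [(0,0); (1,3); (2,4); (3,1); (4,2)].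
Definition Nz : list (zpt*zpt) := [((0,0),(0,1)); ((0,1),(0,2)); ((0,1),(1,1)); ((0,2),(0,3)); ((0,3),(1,3)); ((1,0),(0,0)); ((1,1),(1,0)); ((1,1),(2,1)); ((1,2),(1,1)); ((1,2),(2,2)); ((1,3),(1,2)); ((1,3),(1,4)); ((1,4),(2,4)); ((2,0),(1,0)); ((2,1),(3,1)); ((2,2),(2,1)); ((2,2),(3,2)); ((2,3),(1,3)); ((2,3),(2,2)); ((2,4),(2,3)); ((3,0),(2,0)); ((3,1),(3,0)); ((3,1),(3,2)); ((3,2),(3,3)); ((3,2),(4,2)); ((3,3),(2,3)); ((3,3),(3,4)); ((3,4),(2,4)); ((4,1),(3,1)); ((4,2),(4,1)); ((4,2),(4,3)); ((4,3),(3,3))].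
Definition NEz : list (zpt*zpt) := Nz ++ [((4,3),(4,4)); ((4,4),(3,4))].
Definition table : list (zpt*zpt*list zpt) := [((0,0),(1,3),[(0,1); (0,2); (0,3); (1,3)]); ((0,0),(2,4),[(0,1); (0,2); (0,3); (1,3); (1,4); (2,4)]); ((0,0),(3,1),[(0,1); (1,1); (2,1); (3,1)]); ((0,0),(4,2),[(0,1); (1,1); (2,1); (3,1); (3,2); (4,2)]); ((1,3),(0,0),[(1,2); (1,1); (1,0); (0,0)]); ((1,3),(2,4),[(1,4); (2,4)]); ((1,3),(3,1),[(1,2); (1,1); (2,1); (3,1)]); ((1,3),(4,2),[(1,2); (2,2); (3,2); (4,2)]); ((2,4),(0,0),[(2,3); (1,3); (1,2); (1,1); (1,0); (0,0)]); ((2,4),(1,3),[(2,3); (1,3)]); ((2,4),(3,1),[(2,3); (2,2); (2,1); (3,1)]); ((2,4),(4,2),[(2,3); (2,2); (3,2); (4,2)]); ((3,1),(0,0),[(3,0); (2,0); (1,0); (0,0)]); ((3,1),(1,3),[(3,2); (3,3); (2,3); (1,3)]); ((3,1),(2,4),[(3,2); (3,3); (3,4); (2,4)]); ((3,1),(4,2),[(3,2); (4,2)]); ((4,2),(0,0),[(4,1); (3,1); (3,0); (2,0); (1,0); (0,0)]); ((4,2),(1,3),[(4,3); (3,3); (2,3); (1,3)]); ((4,2),(2,4),[(4,3); (3,3); (3,4); (2,4)]); ((4,2),(3,1),[(4,1); (3,1)])].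
Close Scope Z_scope.

Definition grid_pts := list_prod (map fst Tz) (map snd Tz).

Lemma checks :
  check_net Tz Nz table = true /\ check_net Tz NEz table = true /\
  zlen NEz = 34%Z /\ zlen Nz = 32%Z /\
  forallb (fun e => zNE Tz (fst e) (snd e)) NEz = true /\
  forallb (fun u => forallb (fun v => negb (zNE Tz u v) || inE (u, v) NEz) grid_pts) grid_pts = true.
Proof. vm_compute. repeat split. Qed.

Theorem mainTheorem6 :
  exists T : list point,
    length T = 5%nat /\
    NoDup (map px T) /\ NoDup (map py T) /\
    exists NE : list dedge,
      (forall p q, In (p, q) NE <-> in_N_empty T p q) /\
      bidirected_MN T NE /\
      net_length NE = 34 /\
      exists N : list dedge, bidirected_MN T N /\ net_length N = 32.
Proof.
  destruct checks as [C1 [C2 [C3 [C4 [C5 C6]]]]].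
  exists (map toR Tz). split; [reflexivity|].
  split. { rewrite map_px. apply Injective_map_NoDup; [intros x y; apply eq_IZR|].
    simpl. repeat constructor; simpl; lia. }
  split. { rewrite map_py. apply Injective_map_NoDup; [intros x y; apply eq_IZR|].
    simpl. repeat constructor; simpl; lia. }
  exists (map toR2 NEz). split; [|split; [apply (check_net_ok _ _ table); auto|split]].
  - intros p q. split.
    + intro H. apply in_map_iff in H; destruct H as [[u v] [He Hi]].
      unfold toR2 in He; simpl in He; inversion He; subst.
      apply NE_iff. rewrite forallb_iff in C5. apply (C5 _ Hi).
    + intro H.
      assert (Hg := proj1 H). unfold grid_edge in Hg. rewrite map_px, map_py in Hg.
      destruct p as [p1 p2], q as [q1 q2]; unfold px, py in Hg; cbn [fst snd] in Hg.
      assert (exists x1 y1 x2 y2, In x1 (map fst Tz) /\ In y1 (map snd Tz) /\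
                 In x2 (map fst Tz) /\ In y2 (map snd Tz) /\
                 p1 = IZR x1 /\ p2 = IZR y1 /\ q1 = IZR x2 /\ q2 = IZR y2) as Hx.
      { destruct Hg as [[Hy [Hyy [Hx1 [Hx2 _]]]] | [Hx [Hxx [Hy1 [Hy2 _]]]]].
        - apply In_IZR_ex in Hy; destruct Hy as [y [-> Hy]].
          apply In_IZR_ex in Hx1; destruct Hx1 as [x1 [-> Hx1]].
          apply In_IZR_ex in Hx2; destruct Hx2 as [x2 [-> Hx2]].
          exists x1, y, x2, y; repeat split; auto.
        - apply In_IZR_ex in Hx; destruct Hx as [x [-> Hx]].
          apply In_IZR_ex in Hy1; destruct Hy1 as [y1 [-> Hy1]].
          apply In_IZR_ex in Hy2; destruct Hy2 as [y2 [-> Hy2]].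
          exists x, y1, x, y2; repeat split; auto. }
      destruct Hx as [x1 [y1 [x2 [y2 [I1 [I2 [I3 [I4 [-> [-> [-> ->]]]]]]]]]]].
      change (IZR x1, IZR y1) with (toR (x1, y1)) in *.
      change (IZR x2, IZR y2) with (toR (x2, y2)) in *.
      change (toR (x1, y1), toR (x2, y2)) with (toR2 ((x1, y1), (x2, y2))).
      apply in_map. apply NE_iff in H.
      rewrite forallb_iff in C6.
      assert (Hu : In (x1, y1) grid_pts) by (apply in_prod; auto).
      assert (Hv : In (x2, y2) grid_pts) by (apply in_prod; auto).
      specialize (C6 _ Hu); rewrite forallb_iff in C6; specialize (C6 _ Hv).
      rewrite H in C6; simpl in C6. apply inE_iff; auto.
  - rewrite len_ok, C3; reflexivity.
  - exists (map toR2 Nz). split; [apply (check_net_ok _ _ table); auto|].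
    rewrite len_ok, C4; reflexivity.
Qed.
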